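(* Let $R$ be a ring satisfying condition (C): every subring of $Q_{\max}^r(R)$ containing $R$ is flat as a left $R$-module. Then for every successor ordinal $\alpha$, the Gabriel filter $\mathcal{E}_\alpha$ (defined in the context) has a basis consisting of finitely generated right ideals, i.e. for every $I\in\mathcal{E}_\alpha$ there is a finitely generated right ideal $J\in\mathcal{E}_\alpha$ with $J\subseteq I$.
   Context: Rings are associative with unit; modules are right modules. For a Gabriel filter $\mathcal{E}$ of right ideals of $R$ (equivalently a hereditary torsion theory whose torsion modules $M$ are those with $\{r: mr=0\}\in\mathcal{E}$ for all $m\in M$), $R_{\mathcal{E}}=\varinjlim_{I\in\mathcal{E}}\mathrm{Hom}_R(I,R/\mathcal{T}R)$ is its right ring of quotients. The rings $Q_\alpha\subseteq Q_{\max}^r(R)$ and filters $\mathcal{E}_\alpha$ are defined by transfinite induction: $\mathcal{E}_0$ is the set of dense right ideals and $Q_0=Q_{\max}^r(R)$; $\mathcal{E}_{\alpha+1}=\{I \text{ right ideal of } R: IQ_\alpha=Q_\alpha\}$ (the Gabriel filter of the torsion theory whose torsion modules are the $M$ with $M\otimes_R Q_\alpha=0$) and $Q_{\alpha+1}=R_{\mathcal{E}_{\alpha+1}}$; for limit $\alpha$, $\mathcal{E}_\alpha=\bigcap_{\beta<\alpha}\mathcal{E}_\beta$ and $Q_\alpha=R_{\mathcal{E}_\alpha}$. *)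

(* Defs.v *)
From HB Require Import structures.
From mathcomp Require Import all_boot all_order all_algebra.
Set Implicit Arguments. Unset Strict Implicit. Unset Printing Implicit Defensive.
Import GRing.Theory.
Local Open Scope ring_scope.

Section RingTheory.
Variables (R : pzRingType).

Definition right_ideal (I : R -> Prop) : Prop :=
  [/\ I 0, (forall x y, I x -> I y -> I (x + y)) & (forall x r, I x -> I (x * r))].

Definition fg_right_ideal (I : R -> Prop) : Prop :=
  right_ideal I /\
  exists (n : nat) (g : 'I_n -> R),
    forall x, I x <-> exists c : 'I_n -> R, x = \sum_(k < n) g k * c k.

Definition dense_right_ideal (I : R -> Prop) : Prop :=
  right_ideal I /\
  forall x y : R, y != 0 -> exists r, I (x * r) /\ y * r != 0.

Variables (Q : pzRingType) (phi : {rmorphism R -> Q}).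

(* (Q, phi) is the maximal right ring of quotients of R:
   phi is injective, Q_R is a rational extension of R_R (Q is a right ring of
   quotients of R), and every R-homomorphism from a dense right ideal to R is
   left multiplication by an element of Q (so Q = lim_{I dense} Hom_R(I,R)). *)
Definition is_Qmax : Prop :=
  [/\ injective phi,
      (forall p q : Q, q != 0 ->
          exists r : R, (exists s : R, p * phi r = phi s) /\ q * phi r != 0)
    & (forall (I : R -> Prop) (f : R -> R), dense_right_ideal I ->
          (forall x y, I x -> I y -> f (x + y) = f x + f y) ->
          (forall x r, I x -> f (x * r) = f x * r) ->
          exists q : Q, forall x, I x -> phi (f x) = q * phi x)].

Definition subring_over (S : Q -> Prop) : Prop :=
  [/\ S 1, (forall x y, S x -> S y -> S (x - y)),
      (forall x y, S x -> S y -> S (x * y)) & (forall r, S (phi r))].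

(* Tensor products A (x)_R S, for A a right R-module (= left R^c-module) and
   S a subset of Q closed under the left R-action r.m = phi r * m.  Elements
   of A (x)_R S are represented by finite lists of pairs (a, m) (formal sums
   of simple tensors a (x) m); [tens_rel] is the congruence generated by the
   defining relations of the tensor product. *)
Section Tensor.
Variables (A : lmodType R^c) (S : Q -> Prop).

Definition allS (s : seq (A * Q)) : Prop := forall p, p \in s -> S p.2.

Inductive tens_rel : seq (A * Q) -> seq (A * Q) -> Prop :=
| tens_refl s : allS s -> tens_rel s s
| tens_sym s t : tens_rel s t -> tens_rel t s
| tens_trans s t u : tens_rel s t -> tens_rel t u -> tens_rel s u
| tens_perm s t : allS s -> perm_eq s t -> tens_rel s t
| tens_cat s s' t : tens_rel s s' -> allS t -> tens_rel (s ++ t) (s' ++ t)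
| tens_addl (a a' : A) m : S m -> tens_rel [:: (a + a', m)] [:: (a, m); (a', m)]
| tens_addr (a : A) m m' : S m -> S m' ->
    tens_rel [:: (a, m + m')] [:: (a, m); (a, m')]
| tens_bal (a : A) (r : R) m : S m ->
    tens_rel [:: ((r : R^c) *: a, m)] [:: (a, phi r * m)]
| tens_zero m : S m -> tens_rel [:: (0, m)] [::].

End Tensor.

Definition flat_left (S : Q -> Prop) : Prop :=
  forall (A B : lmodType R^c) (f : {linear A -> B}), injective f ->
  forall s : seq (A * Q), allS S s ->
    tens_rel S [seq (f p.1, p.2) | p <- s] [::] -> tens_rel S s [::].

Definition condC : Prop :=
  forall S : Q -> Prop, subring_over S -> flat_left S.

Definition ideal_ext_full (I : R -> Prop) (S : Q -> Prop) : Prop :=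
  forall q : Q, S q <->
    exists (n : nat) (i : 'I_n -> R) (t : 'I_n -> Q),
      [/\ forall k, I (i k), forall k, S (t k) & q = \sum_(k < n) phi (i k) * t k].

(* R_E, viewed inside Q = Q_max: the q with q I contained in R for some I in E *)
Definition ring_of_quot (E : (R -> Prop) -> Prop) (q : Q) : Prop :=
  exists I, E I /\ forall x, I x -> exists s : R, q * phi x = phi s.

End RingTheory.

Definition well_order (W : Type) (lt : W -> W -> Prop) : Prop :=
  [/\ well_founded lt, (forall x y z, lt x y -> lt y z -> lt x z)
    & (forall x y, [\/ lt x y, x = y | lt y x])].

Definition is_least (W : Type) (lt : W -> W -> Prop) (w : W) : Prop :=
  forall v, ~ lt v w.

Definition is_succ_of (W : Type) (lt : W -> W -> Prop) (w v : W) : Prop :=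
  lt v w /\ forall u, ~ (lt v u /\ lt u w).

Definition is_limit (W : Type) (lt : W -> W -> Prop) (w : W) : Prop :=
  ~ is_least lt w /\ forall v, ~ is_succ_of lt w v.

(* Main.v *)
From HB Require Import structures.
Require Import Defs.
From mathcomp Require Import all_boot all_order all_algebra.
From Stdlib Require Import ClassicalEpsilon FunctionalExtensionality PropExtensionality Classical.
Set Implicit Arguments. Unset Strict Implicit. Unset Printing Implicit Defensive.
Import GRing.Theory.
Local Open Scope ring_scope.

Lemma subr_tri (V : zmodType) (x y z : V) : y - z = (x - z) - (x - y).
Proof. by rewrite opprB [RHS]addrC addrA subrK. Qed.
Record rideal (R : pzRingType) := RIdeal { rid :> R -> Prop; ridP : right_ideal rid }.

Section Quot.
Variables (R : pzRingType) (I : rideal R).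
Lemma I0 : I 0. Proof. by case: (ridP I). Qed.
Lemma ID : forall x y, I x -> I y -> I (x + y). Proof. by case: (ridP I). Qed.
Lemma IM : forall x r, I x -> I (x * r). Proof. by case: (ridP I). Qed.

Lemma IN x : I x -> I (- x).
Proof. by move=> Ix; rewrite -mulrN1; apply: IM. Qed.
Lemma IB x y : I x -> I y -> I (x - y).
Proof. by move=> ??; apply: ID => //; apply: IN. Qed.

Definition bI (x : R) : bool := if excluded_middle_informative (I x) then true else false.
Lemma bIP x : bI x <-> I x.
Proof. by rewrite /bI; case: excluded_middle_informative. Qed.

Lemma ex_cls x : exists y, bI (x - y).
Proof. by exists x; apply/bIP; rewrite subrr; exact: I0. Qed.

Definition canon x : R := xchoose (ex_cls x).

Lemma canon_rel x : I (x - canon x).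
Proof. exact/bIP/(xchooseP (ex_cls x)). Qed.

Lemma canon_eq x y : I (x - y) -> canon x = canon y.
Proof.
move=> Ixy; apply: eq_xchoose => z; apply/idP/idP => /bIP H; apply/bIP.
  by rewrite (subr_tri x); apply: IB.
by rewrite (subr_tri y); apply: IB => //; rewrite -opprB; apply: IN.
Qed.

Lemma canon_eqP x y : canon x = canon y <-> I (x - y).
Proof.
split; last exact: canon_eq.
move=> e; have h1 := canon_rel x; have h2 := canon_rel y.
rewrite e in h1; rewrite (subr_tri (canon y)); apply: IB; rewrite -opprB; exact: IN.
Qed.

Lemma canon_id x : canon (canon x) = canon x.
Proof. apply: canon_eq; rewrite -opprB; apply: IN; exact: canon_rel. Qed.

Definition quotT := {x : R | canon x == x}.
HB.instance Definition _ := Choice.on quotT.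

Definition qpi (x : R) : quotT := exist _ (canon x) (introT eqP (canon_id x)).

Lemma piK (a : quotT) : qpi (val a) = a.
Proof. by apply: val_inj => /=; case: a => x /= /eqP. Qed.

Lemma pi_eq x y : qpi x = qpi y <-> I (x - y).
Proof. by rewrite -canon_eqP; split => [/(congr1 val)//|e]; apply: val_inj. Qed.

Lemma pi_ind (P : quotT -> Prop) : (forall x, P (qpi x)) -> forall a, P a.
Proof. by move=> H a; rewrite -(piK a). Qed.

Definition qzero := qpi 0.
Definition qadd (a b : quotT) := qpi (val a + val b).
Definition qopp (a : quotT) := qpi (- val a).

Lemma val_pi x : I (val (qpi x) - x).
Proof. by rewrite /= -opprB; apply: IN; apply: canon_rel. Qed.

Lemma qaddE x y : qadd (qpi x) (qpi y) = qpi (x + y).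
Proof.
apply/pi_eq; rewrite opprD addrACA; apply: ID; exact: val_pi.
Qed.
Lemma qoppE x : qopp (qpi x) = qpi (- x).
Proof. by apply/pi_eq; rewrite opprK addrC -opprB; apply: IN; apply: val_pi. Qed.

Lemma qaddA : associative qadd.
Proof. by elim/pi_ind=> x; elim/pi_ind=> y; elim/pi_ind=> z; rewrite !qaddE addrA. Qed.
Lemma qaddC : commutative qadd.
Proof. by elim/pi_ind=> x; elim/pi_ind=> y; rewrite !qaddE addrC. Qed.
Lemma qadd0 : left_id qzero qadd.
Proof. by elim/pi_ind=> x; rewrite /qzero qaddE add0r. Qed.
Lemma qaddN : left_inverse qzero qopp qadd.
Proof. by elim/pi_ind=> x; rewrite qoppE qaddE addNr. Qed.

HB.instance Definition _ := GRing.isZmodule.Build quotT qaddA qaddC qadd0 qaddN.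

Definition qscale (r : R^c) (a : quotT) : quotT := qpi (val a * (r : R)).

Lemma qscaleE r x : qscale r (qpi x) = qpi (x * r).
Proof. by apply/pi_eq; rewrite -mulrBl; apply: IM; apply: val_pi. Qed.

Lemma qscaleA a b v : qscale a (qscale b v) = qscale (a * b) v.
Proof. by elim/pi_ind: v => x; rewrite !qscaleE -mulrA. Qed.
Lemma qscale1 : left_id 1 qscale.
Proof. by elim/pi_ind=> x; rewrite qscaleE mulr1. Qed.
Lemma qscaleDr : right_distributive qscale +%R.
Proof.
move=> a; elim/pi_ind=> x; elim/pi_ind=> y; rewrite /GRing.add /= qaddE !qscaleE qaddE.
by rewrite mulrDl.
Qed.
Lemma qscaleDl v : {morph qscale^~ v: a b / a + b}.
Proof.
by elim/pi_ind: v => x a b; rewrite /GRing.add /= !qscaleE qaddE -mulrDr.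
Qed.

HB.instance Definition _ := GRing.Zmodule_isLmodule.Build R^c quotT qscaleA qscale1 qscaleDr qscaleDl.

Lemma piD x y : qpi (x + y) = qpi x + qpi y.
Proof. by rewrite [RHS]qaddE. Qed.
Lemma piZ x (r : R) : qpi (x * r) = (r : R^c) *: qpi x.
Proof. by rewrite [RHS]qscaleE. Qed.
Lemma pi0 x : qpi x = 0 <-> I x.
Proof. by rewrite [0]/(qpi 0) pi_eq subr0. Qed.

End Quot.

Section Main.
Variables (R Q : pzRingType) (phi : {rmorphism R -> Q}) (S : Q -> Prop).
Hypothesis HS : subring_over phi S.

Lemma S1 : S 1. Proof. by case: HS. Qed.
Lemma SB x y : S x -> S y -> S (x - y). Proof. by case: HS => _ h _ _; apply: h. Qed.
Lemma SM x y : S x -> S y -> S (x * y). Proof. by case: HS => _ _ h _; apply: h. Qed.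
Lemma Sphi r : S (phi r). Proof. by case: HS. Qed.
Lemma S0 : S 0. Proof. by rewrite -(subrr 1); apply: SB; apply: S1. Qed.
Lemma SN x : S x -> S (- x). Proof. by move=> h; rewrite -sub0r; apply: SB => //; apply: S0. Qed.
Lemma SD x y : S x -> S y -> S (x + y). Proof. by move=> ??; rewrite -[y]opprK; apply: SB => //; apply: SN. Qed.

Inductive gen (I : R -> Prop) : Q -> Prop :=
| gen0 : gen I 0
| genD a b : gen I a -> gen I b -> gen I (a + b)
| genM i t : I i -> S t -> gen I (phi i * t).

Lemma genN I a : gen I a -> gen I (- a).
Proof.
elim=> [|a' b _ ha _ hb|i t Ii St]; first by rewrite oppr0; apply: gen0.
  by rewrite opprD; apply: genD.
by rewrite -mulrN; apply: genM => //; apply: SN.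
Qed.
Lemma genB I a b : gen I a -> gen I b -> gen I (a - b).
Proof. by move=> ??; apply: genD => //; apply: genN. Qed.

Lemma genS I a : gen I a -> S a.
Proof.
elim=> [|*|*]; [exact: S0|exact: SD|].
by apply: SM => //; apply: Sphi.
Qed.

Lemma gen_mono (I J : R -> Prop) a : (forall x, I x -> J x) -> gen I a -> gen J a.
Proof. move=> IJ; elim=> *; [exact: gen0|exact: genD|apply: genM; auto]. Qed.

Definition fam (I : R -> Prop) (q : Q) :=
  exists (n : nat) (i : 'I_n -> R) (t : 'I_n -> Q),
      [/\ forall k, I (i k), forall k, S (t k) & q = \sum_(k < n) phi (i k) * t k].

Lemma fam_gen I q : fam I q -> gen I q.
Proof.
case=> n [i [t [Ii St ->]]].
apply: (big_ind (gen I)); [exact: gen0|exact: genD|move=> k _; exact: genM].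
Qed.

Lemma gen_fam I q : gen I q -> fam I q.
Proof.
elim=> [|a b _ [n1 [i1 [t1 [Ii1 St1 ->]]]] _ [n2 [i2 [t2 [Ii2 St2 ->]]]]|i t Ii St].
- by exists 0%N, (fun _ => 0), (fun _ => 0); split => [[]|[]|]//; rewrite big_ord0.
- exists (n1 + n2)%N, (fun k => match split k with inl a => i1 a | inr b => i2 b end),
    (fun k => match split k with inl a => t1 a | inr b => t2 b end); split.
  + by move=> k; case: (split k).
  + by move=> k; case: (split k).
  + rewrite big_split_ord /=; congr (_ + _); apply: eq_bigr => k _.
      by rewrite -[lshift _ _]/(unsplit (inl k)) unsplitK.
    by rewrite -[rshift _ _]/(unsplit (inr k)) unsplitK.
- by exists 1%N, (fun _ => i), (fun _ => t); split => //; rewrite big_ord1.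
Qed.



Section Tens.
Variable (I : rideal R).

Let A := quotT I.
Definition psi (s : seq (A * Q)) : Q := \sum_(p <- s) phi (val p.1) * p.2.

Lemma val_rel (a : A) x : a = qpi I x -> I (val a - x).
Proof. by move=> ->; apply: val_pi. Qed.

Lemma psi_inv s t : tens_rel phi S s t -> gen I (psi s - psi t).
Proof.
elim=> {s t}.
- by move=> s _; rewrite subrr; apply: gen0.
- by move=> s t _ h; rewrite -opprB; apply: genN.
- by move=> s t u _ h1 _ h2; rewrite -(subrK (psi t) (psi s)) -addrA; apply: genD.
- by move=> s t _ pst; rewrite /psi (perm_big _ pst) subrr; apply: gen0.
- move=> s s' t _ h _; rewrite /psi !big_cat /=.
  by rewrite opprD addrACA subrr addr0.
- move=> a a' m Sm.
  have h : I (val (a + a') - (val a + val a')).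
    by apply: val_rel; rewrite -{1}(piK a) -{1}(piK a') -piD.
  move: h; rewrite /psi !big_cons !big_nil /= !addr0 => h.
  by rewrite -!mulrDl -mulrBl -!rmorphD -rmorphB; apply: genM.
- move=> a m m' Sm Sm'; rewrite /psi !big_cons !big_nil /= !addr0.
  by rewrite mulrDr subrr; apply: gen0.
- move=> a r m Sm.
  have h : I (val ((r : R^c) *: a) - val a * r).
    by apply: val_rel; rewrite -{1}(piK a) -piZ.
  move: h; rewrite /psi !big_cons !big_nil /= !addr0 => h.
  by rewrite mulrA -rmorphM -mulrBl -rmorphB; apply: genM.
- move=> m Sm.
  have h : I (val (0 : A) - 0).
    by apply: val_rel; apply/esym/pi0; apply: I0.
  move: h; rewrite /psi !big_cons !big_nil /= !addr0 subr0 => h.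
  by rewrite subr0; apply: genM.
Qed.

End Tens.

Lemma allS1 (B : lmodType R^c) (a : B) m : S m -> allS S [:: (a, m)].
Proof. by move=> Sm p; rewrite inE => /eqP ->. Qed.

Lemma gen_kill (I : rideal R) m : gen I m -> tens_rel phi S [:: (qpi I 1, m)] [::].
Proof.
set a := qpi I 1.
elim=> [|ma mb gma IHa gmb IHb|i t Ii St].
- have := tens_bal phi a 0 S0; rewrite scale0r rmorph0 mul0r => h.
  exact: tens_trans (tens_sym h) (tens_zero phi _ S0).
- apply: tens_trans (tens_addr phi a (genS gma) (genS gmb)) _.
  have := tens_cat IHa (@allS1 _ a _ (genS gmb)); rewrite /= => h.
  exact: tens_trans h IHb.
- have := tens_bal phi a i St.
  have -> : (i : R^c) *: a = 0.
    by rewrite /a -piZ mul1r; apply/pi0.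
  move=> h; exact: tens_trans (tens_sym h) (tens_zero phi _ St).
Qed.

Lemma gen_mulr I a q : gen I a -> S q -> gen I (a * q).
Proof.
move=> g Sq; elim: g => [|a1 b1 _ h1 _ h2|i t Ii St].
- by rewrite mul0r; apply: gen0.
- by rewrite mulrDl; apply: genD.
- by rewrite -mulrA; apply: genM => //; apply: SM.
Qed.

Lemma gen_kill_all (I : rideal R) (a : quotT I) m : gen I 1 -> S m ->
  tens_rel phi S [:: (a, m)] [::].
Proof.
move=> g1 Sm; have := tens_bal phi (qpi I 1) (val a) Sm.
rewrite -piZ mul1r piK => h; apply: tens_trans h _.
apply: gen_kill; rewrite -(mul1r (_ * m)); apply: gen_mulr => //.
by apply: SM => //; apply: Sphi.
Qed.

Lemma ext_full_gen I : ideal_ext_full phi I S <-> gen I 1.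
Proof.
split=> [h|g1 q].
  by apply: fam_gen; apply/h; apply: S1.
split=> [Sq|/fam_gen/genS//].
by apply: gen_fam; rewrite -(mul1r q); apply: gen_mulr.
Qed.

Definition preim (I : R -> Prop) (r : R) := fun y => I (r * y).

Lemma preim_ri I r : right_ideal I -> right_ideal (preim I r).
Proof.
case=> h0 hD hM; split; rewrite /preim.
- by rewrite mulr0.
- by move=> x y ??; rewrite mulrDr; apply: hD.
- by move=> x t ?; rewrite mulrA; apply: hM.
Qed.

Lemma flat_T3 (I : R -> Prop) (r : R) : flat_left phi S -> right_ideal I -> gen I 1 ->
  gen (preim I r) 1.
Proof.
move=> fl ri g1.
pose II := RIdeal ri; pose K := RIdeal (preim_ri r ri).
pose f (a : quotT K) : quotT II := qpi II (r * val a).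
have flin : linear f.
  move=> c a b; rewrite /f -piZ -piD; apply/pi_eq.
  rewrite -mulrA -mulrDr -mulrBr.
  have: K (val (c *: a + b) - (val a * c + val b)).
    by apply: val_rel; rewrite piD piZ !piK.
  by [].
have finj : injective f.
  move=> a b /pi_eq; rewrite -mulrBr => h.
  by rewrite -(piK a) -(piK b); apply/pi_eq.
pose fL := HB.pack_for {linear quotT K -> quotT II} f (GRing.isLinear.Build _ _ _ _ f flin).
have := fl (quotT K) (quotT II) fL finj [:: (qpi K 1, 1)] (@allS1 _ (qpi K 1) _ S1).
move=> /(_ (gen_kill_all (f (qpi K 1)) g1 S1)) /psi_inv.
rewrite /psi big_cons big_nil /= !addr0 subr0 => h.
have -> : (1 : Q) = phi (val (qpi K 1)) * 1 - phi (val (qpi K 1) - 1) * 1.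
  by rewrite -mulrBl rmorphB opprB addrC subrK rmorph1 mulr1.
apply: genB => //; apply: genM; last exact: S1. exact: (val_pi K 1).
Qed.

End Main.


Section Filters.
Variables (R Q : pzRingType) (phi : {rmorphism R -> Q}).

Definition Gab (E : (R -> Prop) -> Prop) :=
 [/\ forall I, E I -> right_ideal I,
     E (fun _ => True),
     forall I r, E I -> E (preim I r) &
     forall I J, right_ideal I -> E J -> (forall x, J x -> E (preim I x)) -> E I].

Lemma ri_cap (I J : R -> Prop) : right_ideal I -> right_ideal J -> right_ideal (fun x => I x /\ J x).
Proof.
case=> a b c [d e f]; split; first by split.
  by move=> x y [??] [??]; split; auto.
by move=> x r [??]; split; auto.
Qed.

Lemma Gab_cap E I J : Gab E -> E I -> E J -> E (fun x => I x /\ J x).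
Proof.
case=> ri _ h3 h4 EI EJ; apply: (h4 _ J); [exact: ri_cap (ri _ EI) (ri _ EJ)|exact: EJ|].
move=> x Jx.
have -> : preim (fun x => I x /\ J x) x = preim I x.
  apply: functional_extensionality => y; apply: propositional_extensionality.
  rewrite /preim; split=> [[]//|Ixy]; split => //.
  by case: (ri _ EJ) => _ _; apply.
exact: h3.
Qed.

Lemma Gab_roq E : injective phi -> Gab E -> subring_over phi (ring_of_quot phi E).
Proof.
move=> phiI GE; have [ri ET h3 h4] := GE; split.
- by exists (fun _ => True); split => // x _; exists x; rewrite mul1r.
- move=> p q [I1 [E1 h1]] [I2 [E2 h2]].
  exists (fun x => I1 x /\ I2 x); split; first exact: Gab_cap.
  move=> x [/h1 [s1 e1] /h2 [s2 e2]]; exists (s1 - s2).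
  by rewrite mulrBl e1 e2 rmorphB.
- move=> p q [I1 [E1 h1]] [I2 [E2 h2]].
  pose K := fun x => I2 x /\ exists s, q * phi x = phi s /\ I1 s.
  have riK : right_ideal K.
    have [a1 b1 c1] := ri _ E1; have [a2 b2 c2] := ri _ E2.
    split.
    + by split => //; exists 0; rewrite !rmorph0 mulr0.
    + move=> x y [Ix [s [es Is]]] [Iy [t [et It]]]; split; first by auto.
      by exists (s + t); split; [rewrite !rmorphD mulrDr es et|auto].
    + move=> x r [Ix [s [es Is]]]; split; first by auto.
      by exists (s * r); split; [rewrite !rmorphM mulrA es|auto].
  have EK : E K.
    apply: (h4 _ I2) => // x I2x.
    have [sx ex] := h2 x I2x.
    have -> : preim K x = preim I1 sx.
      apply: functional_extensionality => y; apply: propositional_extensionality.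
      rewrite /preim /K; split.
      * move=> [_ [s [es Is]]]; move: es; rewrite rmorphM mulrA ex -rmorphM.
        by move=> /phiI ->.
      * move=> Is; split; first by case: (ri _ E2) => _ _; apply.
        by exists (sx * y); rewrite rmorphM mulrA ex rmorphM.
    exact: h3.
  exists K; split => // x [_ [s [es Is]]].
  have [s' e'] := h1 s Is; exists s'; by rewrite -mulrA es.
- move=> r; exists (fun _ => True); split => // x _; exists (r * x).
  by rewrite rmorphM.
Qed.

Lemma Gab_dense : Gab (@dense_right_ideal R).
Proof.
split.
- by move=> I [].
- split; first by split.
  by move=> x y y0; exists 1; rewrite mulr1.
- move=> I r [ri d]; split; first exact: preim_ri.
  move=> x y y0; have [t [It yt]] := d (r * x) y y0.
  by exists t; rewrite /preim mulrA.
- move=> I J ri [riJ dJ] h; split => // x y y0.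
  have [t [Jxt yt]] := dJ x y y0.
  have [_ d2] := h _ Jxt.
  have [u [Iu yu]] := d2 1 (y * t) yt.
  exists (t * u); rewrite !mulrA; split => //; move: Iu; rewrite /preim mul1r. done.
Qed.

Lemma Gab_inter (T : Type) (F : T -> (R -> Prop) -> Prop) (P : T -> Prop) :
  (exists t, P t) -> (forall t, P t -> Gab (F t)) ->
  Gab (fun I => right_ideal I /\ forall t, P t -> F t I).
Proof.
move=> [t0 Pt0] G; split.
- by move=> I [].
- split; first by split.
  by move=> t Pt; have [] := G t Pt.
- move=> I r [ri h]; split; first exact: preim_ri.
  by move=> t Pt; have [_ _ h3 _] := G t Pt; apply: h3; apply: h.
- move=> I J ri [riJ hJ] h; split => // t Pt.
  have [_ _ _ h4] := G t Pt; apply: (h4 _ J) => //; first exact: hJ.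
  by move=> x Jx; have [_ ] := h x Jx; apply.
Qed.

Lemma Gab_succ S : subring_over phi S -> flat_left phi S ->
  Gab (fun I => right_ideal I /\ ideal_ext_full phi I S).
Proof.
move=> HS fl; split.
- by move=> I [].
- split; first by split.
  apply/(ext_full_gen HS); rewrite -(mulr1 1) -{1}(rmorph1 phi).
  exact: (@genM _ _ phi S (fun=> True) 1 1 I (S1 HS)).
- move=> I r [ri /(ext_full_gen HS) g]; split; first exact: preim_ri.
  by apply/(ext_full_gen HS); apply: flat_T3.
- move=> I J ri [riJ /(ext_full_gen HS) gJ] h; split => //.
  apply/(ext_full_gen HS).
  suff: forall a, gen phi S J a -> gen phi S I a by apply.
  move=> a; elim=> [|*|j t Jj St]; [exact: gen0|exact: genD|].
  have [_ /(ext_full_gen HS) gK] := h j Jj.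
  have := gen_mulr HS gK St; rewrite mul1r.
  elim=> [|*|y u Iy Su]; first by rewrite mulr0; apply: gen0.
    by rewrite mulrDr; apply: genD.
  by rewrite mulrA -rmorphM; apply: genM.
Qed.

End Filters.

Unset Implicit Arguments.

Theorem lemma4p1 (R Q : pzRingType) (phi : {rmorphism R -> Q})
  (W : Type) (lt : W -> W -> Prop)
  (E : W -> (R -> Prop) -> Prop) (Qa : W -> Q -> Prop) :
  is_Qmax phi ->
  condC phi ->
  well_order lt ->
  (forall w, is_least lt w ->
     (forall I, E w I <-> dense_right_ideal I) /\ (forall q, Qa w q)) ->
  (forall w v, is_succ_of lt w v ->
     (forall I, E w I <-> right_ideal I /\ ideal_ext_full phi I (Qa v)) /\
     (forall q, Qa w q <-> ring_of_quot phi (E w) q)) ->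
  (forall w, is_limit lt w ->
     (forall I, E w I <-> right_ideal I /\ (forall v, lt v w -> E v I)) /\
     (forall q, Qa w q <-> ring_of_quot phi (E w) q)) ->
  forall w v, is_succ_of lt w v ->
  forall I, E w I ->
  exists J, [/\ fg_right_ideal J, E w J & forall x, J x -> I x].
Proof.
move=> Hq HC [wf _ _] Hleast Hsucc Hlim.
have phiI : injective phi by case: Hq.
have fext : forall (T : Type) (P1 P2 : T -> Prop), (forall x, P1 x <-> P2 x) -> P1 = P2.
  move=> T P1 P2 h; apply: functional_extensionality => x.
  exact: propositional_extensionality.
have G : forall v, Gab (E v) /\ subring_over phi (Qa v).
  elim/(well_founded_ind wf) => v IH.
  case: (classic (is_least lt v)) => [lv | nlv].
    have [hE hQ] := Hleast v lv.
    rewrite (fext _ _ _ hE); split; first exact: Gab_dense.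
    by split => *; apply: hQ.
  case: (classic (exists u, is_succ_of lt v u)) => [[u su] | nsu].
    have [hE hQ] := Hsucc v u su.
    have [_ Su] := IH u su.1.
    have GE : Gab (E v).
      by rewrite (fext _ _ _ hE); apply: Gab_succ => //; apply: HC.
    by rewrite (fext _ _ _ hQ); split => //; apply: Gab_roq.
  have lv : is_limit lt v by split => // u su; apply: nsu; exists u.
  have [hE hQ] := Hlim v lv.
  have ex : exists u, lt u v.
    by apply: NNPP => h; apply: nlv => u ltu; apply: h; exists u.
  have GE : Gab (E v).
    rewrite (fext _ _ _ hE); apply: (Gab_inter (F:=E) (P:=fun u => lt u v)) => //.
    by move=> u ltu; case: (IH u ltu).
  by rewrite (fext _ _ _ hQ); split => //; apply: Gab_roq.
move=> w v swv I EwI.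
have [_ Sv] := G v.
have [hE _] := Hsucc w v swv.
have [riI /(ext_full_gen Sv) g1] := (hE I).1 EwI.
have [n [i [t [Ii St e1]]]] := gen_fam g1.
pose J := fun x => exists c : 'I_n -> R, x = \sum_(k < n) i k * c k.
have riJ : right_ideal J.
  split.
  - by exists (fun _ => 0); rewrite big1 // => k _; rewrite mulr0.
  - move=> x y [c ->] [d ->]; exists (fun k => c k + d k).
    by rewrite -big_split; apply: eq_bigr => k _; rewrite mulrDr.
  - move=> x r [c ->]; exists (fun k => c k * r).
    by rewrite mulr_suml; apply: eq_bigr => k _; rewrite mulrA.
exists J; split.
- by split => //; exists n, i.
- apply/hE; split => //; apply/(ext_full_gen Sv); rewrite e1; apply: fam_gen.
  exists n, i, t; split => // k; exists (fun l => if l == k then 1 else 0).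
  rewrite (bigD1 k) //= eqxx mulr1 big1 ?addr0 // => l /negbTE ->.
  by rewrite mulr0.
- move=> x [c ->]; case: riI => I0 ID IM.
  by apply: (big_ind I) => // k _; apply: IM.
Qed.
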